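(* Let $q$ be a prime power and $k\ge3$, $u\ge2$, $h\ge1$ integers. Let $U_1,\dots,U_h$ be $u$-dimensional subspaces of $\mathbf F_q^k$ with $U_i\cap U_j=\{0\}$ for $i\ne j$, and assume $q^k-q^{k-1}>h(q^u-1)$. Let $U$ be the set of nonzero vectors of $\mathbf F_q^k$ not in $U_1\cup\dots\cup U_h$, let $\widetilde G$ be a matrix whose columns consist of exactly one representative of each class $\{\lambda\mathbf v:\lambda\in\mathbf F_q^*\}$, $\mathbf v\in U$, and let $\mathbf C$ be the linear code with generator matrix $\widetilde G$. If $h\le q^u$, then $\mathbf C$ is a linear $\big[\frac{(q^k-1)-h(q^u-1)}{q-1},\,k,\,q^{k-1}-hq^{u-1}\big]_q$ code (i.e., its minimum distance equals $q^{k-1}-hq^{u-1}$). *)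

(* Defs.v *)
From HB Require Import structures.
From mathcomp Require Import all_boot all_order all_algebra.
Set Implicit Arguments. Unset Strict Implicit. Unset Printing Implicit Defensive.
Import GRing.Theory.
Local Open Scope ring_scope.

(* Vectors of F_q^k are row vectors 'rV[F]_k; subspaces are represented
   (mxalgebra style) by square matrices whose row space is the subspace. *)

Definition outside_subspaces (F : fieldType) (k h : nat)
  (Us : 'I_h -> 'M[F]_k) (v : 'rV[F]_k) : bool :=
  (v != 0) && [forall i, ~~ (v <= Us i)%MS].

Definition colv (F : fieldType) (k n : nat) (G : 'M[F]_(k, n)) (j : 'I_n)
  : 'rV[F]_k := (col j G)^T.

Definition wt (F : fieldType) (n : nat) (c : 'rV[F]_n) : nat :=
  #|[set j : 'I_n | c 0 j != 0]|.

Definition code_min_dist (F : fieldType) (k n : nat) (G : 'M[F]_(k, n))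
  (d : nat) : Prop :=
  (exists x : 'rV[F]_k, x *m G != 0 /\ wt (x *m G) = d) /\
  (forall x : 'rV[F]_k, x *m G != 0 -> (d <= wt (x *m G))%N).

(* Main.v *)
Require Import Defs.
From HB Require Import structures.
From mathcomp Require Import all_boot all_order all_algebra.
From mathcomp Require Import zify ring lra.
Import GRing.Theory.
Local Open Scope ring_scope.
Lemma cardsub (F : finFieldType) k m (A : 'M[F]_(m,k)) :
  #|[set v : 'rV[F]_k | (v <= A)%MS]| = (#|F| ^ \rank A)%N.
Proof.
have ->: [set v : 'rV[F]_k | (v <= A)%MS] =
   [set w *m row_base A | w in [set: 'rV[F]_(\rank A)]].
  apply/setP => v; rewrite inE -(eq_row_base A).
  apply/submxP/imsetP => [[w ->]|[w _ ->]]; first by exists w.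
  by exists w.
rewrite card_imset; last exact: row_free_inj (row_base_free A).
by rewrite cardsT card_mx mul1n.
Qed.

Lemma card_nat_sum (T : finType) (Q : pred T) :
  #|[set v | Q v]| = (\sum_v (if Q v then 1 else 0))%N.
Proof.
rewrite -sum1_card big_mkcond /=; apply: eq_bigr => v _; by rewrite inE.
Qed.

Lemma outside_scale (F : fieldType) k h (Us : 'I_h -> 'M[F]_k) (lam : F) v :
  lam != 0 -> outside_subspaces Us (lam *: v) = outside_subspaces Us v.
Proof.
move=> nz; rewrite /outside_subspaces scaler_eq0 (negbTE nz) /=.
congr (_ && _); apply: eq_forallb => i.
by rewrite (eqmx_scale _ nz).
Qed.

Lemma count_cols (F : finFieldType) k h (Us : 'I_h -> 'M[F]_k) n
  (G : 'M[F]_(k, n))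
  (hcols : forall j : 'I_n, outside_subspaces Us (colv G j))
  (hrep : forall v : 'rV[F]_k, outside_subspaces Us v ->
     exists! j : 'I_n, exists2 lam : F, lam != 0 & colv G j = lam *: v)
  (P : pred 'rV[F]_k)
  (Pinv : forall (lam : F) v, lam != 0 -> P (lam *: v) = P v) :
  (#|[set j | P (colv G j)]| * (#|F| - 1))%N =
  #|[set v | outside_subspaces Us v && P v]|.
Proof.
have cF : #|[set lam : F | lam != 0]| = (#|F| - 1)%N.
  have -> : [set lam : F | lam != 0] = [set: F] :\ 0.
    by apply/setP => x; rewrite !inE andbT.
  have := cardsD1 (0:F) [set: F]; rewrite inE cardsT. by move=> ->; rewrite add1n subn1.
rewrite -cF -cardsX.
set D := setX _ _.
have hinj : {in D &, injective (fun p : 'I_n * F => p.2 *: colv G p.1)}.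
  move=> [j lam] [j' mu]; rewrite !inE /= => /andP [_ nzl] /andP [_ nzm] E.
  have nz' : colv G j' != 0 by case/andP: (hcols j').
  have [x [_ ux]] := hrep _ (hcols j').
  have jj : j = j'.
    have <- : x = j by apply: ux; exists (lam^-1 * mu);
       [rewrite mulf_neq0 ?invr_eq0 // | rewrite -scalerA -E scalerA mulVf ?scale1r].
    by apply: ux; exists 1; rewrite ?oner_eq0 ?scale1r.
  subst j'; congr (_, _).
  apply/eqP; rewrite -subr_eq0; apply/eqP.
  have : (lam - mu) *: colv G j == 0 by rewrite scalerBl E subrr.
  by rewrite scaler_eq0 (negbTE nz') orbF => /eqP.
rewrite -(card_in_imset hinj); apply: eq_card => v.
rewrite [in RHS]inE; apply/imsetP/idP.
  move=> [[j lam]]; rewrite !inE /= => /andP [Pj nzl] ->.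
  by rewrite outside_scale // hcols Pinv.
move=> /andP [ov Pv].
have [j [[lam nzl E] _]] := hrep _ ov.
exists (j, lam^-1); last by rewrite /= E scalerA mulVf ?scale1r.
by rewrite !inE /= E Pinv // Pv invr_eq0.
Qed.

Lemma partition_count (F : finFieldType) k h (Us : 'I_h -> 'M[F]_k)
  (hdisj : forall i j, i != j -> (Us i :&: Us j)%MS == 0)
  (P : pred 'rV[F]_k) (Pnz : forall v, P v -> v != 0) :
  #|[set v | P v]| = (#|[set v | outside_subspaces Us v && P v]| +
     \sum_(i < h) #|[set v | (v <= Us i)%MS && P v]|)%N.
Proof.
rewrite (eq_bigr (fun i => \sum_v (if (v <= Us i)%MS && P v then 1 else 0))%N); last by move=> i _; rewrite card_nat_sum.
rewrite (card_nat_sum _ (fun v => outside_subspaces Us v && P v)) (card_nat_sum _ P).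
rewrite exchange_big /= -big_split /=; apply: eq_bigr => v _.
case Pv: (P v); last by rewrite andbF big1 // => i _; rewrite andbF.
rewrite !andbT.
have nz := Pnz _ Pv.
have -> : outside_subspaces Us v = [forall i, ~~ (v <= Us i)%MS].
  by rewrite /outside_subspaces; case: eqP => //= E; rewrite E eqxx in nz.
case: (boolP [forall i, ~~ (v <= Us i)%MS]) => [/forallP H|].
  by rewrite big1 // => i _; rewrite (negbTE (H i)).
rewrite negb_forall => /existsP [i]; rewrite negbK => vi.
rewrite (bigD1 i) //= vi big1 // => j ji.
case vj: (v <= Us j)%MS => //.
have : (v <= Us i :&: Us j)%MS by rewrite sub_capmx vi vj.
rewrite (eqP (hdisj i j _)); last by rewrite eq_sym.
by rewrite submx0 => /eqP v0; rewrite v0 eqxx in nz.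
Qed.

Lemma term_count (F : finFieldType) k (A K : 'M[F]_k) :
  #|[set v : 'rV[F]_k | (v <= A)%MS && ~~ (v <= K)%MS]| =
  (#|F| ^ \rank A - #|F| ^ \rank (A :&: K))%N.
Proof.
have -> : [set v : 'rV[F]_k | (v <= A)%MS && ~~ (v <= K)%MS] =
  [set v | (v <= A)%MS] :\: [set v | (v <= A :&: K)%MS].
  apply/setP => v; rewrite !inE sub_capmx; by case: (v <= A)%MS; case: (v <= K)%MS.
rewrite cardsD (setIidPr _); first by rewrite !cardsub.
by apply/subsetP => v; rewrite !inE sub_capmx => /andP [].
Qed.

Lemma mx11_eq0 (F : fieldType) (B : 'M[F]_1) : (B == 0) = (B 0 0 == 0).
Proof.
apply/eqP/eqP => [->|H]; first by rewrite mxE.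
by apply/matrixP => a b; rewrite !ord1 mxE H.
Qed.

Lemma wt_cols (F : fieldType) k n (G : 'M[F]_(k, n)) (x : 'rV[F]_k) :
  wt (x *m G) = #|[set j | ~~ (colv G j <= kermx x^T)%MS]|.
Proof.
rewrite /wt; apply: (@eq_card _ _ _ _) => j; rewrite !inE sub_kermx /colv -trmx_mul trmx_eq0.
by rewrite !colE mulmxA mx11_eq0 -colE [in RHS]mxE.
Qed.

Lemma rank_cap (F : fieldType) k (A : 'M[F]_k) (x : 'rV[F]_k) : x != 0 ->
  ((\rank A).-1 <= \rank (A :&: kermx x^T) <= \rank A)%N /\
  (~~ (A <= kermx x^T)%MS -> \rank (A :&: kermx x^T) < \rank A)%N.
Proof.
move=> nz.
have rK : \rank (kermx x^T) = k.-1 by rewrite mxrank_ker mxrank_tr rank_rV nz subn1.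
have := mxrank_sum_cap A (kermx x^T).
have : (\rank (A + kermx x^T)%MS <= k)%N by apply: rank_leq_col.
have : (\rank (A :&: kermx x^T)%MS <= \rank A)%N by apply: mxrankS; apply: capmxSl.
rewrite rK; move=> h1 h2 h3; split; first by apply/andP; split => //; lia.
move=> nAK; rewrite ltn_neqAle h1 andbT.
apply: contra nAK => /eqP E.
have := mxrank_leqif_sup (capmxSl A (kermx x^T)).
rewrite E => [[_]]; rewrite eqxx => /esym H.
by apply: submx_trans H _; apply: capmxSr.
Qed.

Lemma cardC_sub (F : finFieldType) k (K : 'M[F]_k) :
  #|[set v : 'rV[F]_k | ~~ (v <= K)%MS]| = (#|F| ^ k - #|F| ^ \rank K)%N.
Proof.
have -> : [set v : 'rV[F]_k | ~~ (v <= K)%MS] = ~: [set v | (v <= K)%MS].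
  by apply/setP => v; rewrite !inE.
have := cardsC [set v : 'rV[F]_k | (v <= K)%MS].
rewrite cardsub card_mx mul1n => <-; by rewrite addKn.
Qed.

Lemma gen_count (F : finFieldType) k h (Us : 'I_h -> 'M[F]_k)
  (hdisj : forall i j, i != j -> (Us i :&: Us j)%MS == 0) n
  (G : 'M[F]_(k, n))
  (hcols : forall j : 'I_n, outside_subspaces Us (colv G j))
  (hrep : forall v : 'rV[F]_k, outside_subspaces Us v ->
     exists! j : 'I_n, exists2 lam : F, lam != 0 & colv G j = lam *: v)
  (K : 'M[F]_k) :
  (#|[set j | ~~ (colv G j <= K)%MS]| * (#|F| - 1) +
   \sum_(i < h) (#|F| ^ \rank (Us i) - #|F| ^ \rank (Us i :&: K)) =
   #|F| ^ k - #|F| ^ \rank K)%N.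
Proof.
pose P := fun v : 'rV[F]_k => ~~ (v <= K)%MS.
have Pinv : forall (lam : F) v, lam != 0 -> P (lam *: v) = P v.
  by move=> lam v nz; rewrite /P (eqmx_scale _ nz).
have Pnz : forall v, P v -> v != 0.
  move=> v; apply: contraNN => /eqP ->; exact: sub0mx.
rewrite (@count_cols F k h Us n G hcols hrep P Pinv) -cardC_sub.
rewrite (@partition_count F k h Us hdisj P Pnz); congr (_ + _)%N.
by apply: eq_bigr => i _; rewrite -term_count.
Qed.

Lemma rank_cap0 (F : fieldType) k (M : 'M[F]_k) : \rank (M :&: (0%R:'M[F]_k))%MS = 0%N.
Proof. by apply/eqP; rewrite -leqn0 -(mxrank0 F k k) mxrankS // capmxSr. Qed.

Lemma exists_good (F : finFieldType) k h u (Us : 'I_h -> 'M[F]_k)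
  (hdim : forall i, \rank (Us i) = u) (hu : (1 <= u)%N) (huk : (u <= k)%N)
  (hhq : (h <= #|F| ^ u)%N) :
  exists x : 'rV[F]_k, x != 0 /\ forall i, ~~ (Us i <= kermx x^T)%MS.
Proof.
case: (boolP [exists x : 'rV[F]_k, (x != 0) && [forall i, ~~ (Us i <= kermx x^T)%MS]]).
  by move=> /existsP [x /andP [nz /forallP H]]; exists x.
rewrite negb_exists => /forallP H.
have bad : forall i (x : 'rV[F]_k), (Us i <= kermx x^T)%MS = (x <= kermx (Us i)^T)%MS.
  by move=> i x; rewrite !sub_kermx -trmx_eq0 trmx_mul trmxK.
have pt : forall x : 'rV[F]_k, (1 <= (if (x <= (0%R:'M[F]_k))%MS then 1 else 0) +
    \sum_(i < h) (if (x <= kermx (Us i)^T)%MS && ~~ (x <= (0%R:'M[F]_k))%MS then 1 else 0))%N.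
  move=> x; case: (boolP (x <= (0%R:'M[F]_k))%MS) => x0; first by rewrite leq_addr.
  have := H x; rewrite negb_and -submx0 x0 /= negb_forall => /existsP [i].
  rewrite negbK bad => Hi.
  by rewrite (bigD1 i) //= Hi.
have e1 : (#|F| ^ k)%N = #|[set x : 'rV[F]_k | true]|.
  have -> : [set x : 'rV[F]_k | true] = setT by apply/setP => x; rewrite !inE.
  by rewrite cardsT card_mx mul1n.
have : (#|F| ^ k <= 1 + \sum_(i < h) (#|F| ^ (k - u) - 1))%N.
  rewrite e1 card_nat_sum.
  apply: leq_trans (leq_sum _ (fun x _ => pt x)) _.
  rewrite big_split exchange_big /=.
  rewrite -(card_nat_sum _ (fun x => (x <= (0%R:'M[F]_k))%MS)) cardsub mxrank0 expn0.
  rewrite leq_add2l; apply: leq_sum => i _.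
  rewrite -(card_nat_sum _ (fun x => (x <= kermx (Us i)^T)%MS && ~~ (x <= (0%R:'M[F]_k))%MS)).
  by rewrite term_count rank_cap0 mxrank_ker mxrank_tr hdim expn0.
rewrite big_const_ord iter_addn_0.
have q2 : (2 <= #|F|)%N by exact: card_finNzRing_gt1.
have ek : (#|F| ^ k = #|F| ^ (k - u) * #|F| ^ u)%N by rewrite -expnD subnK.
have a1 : (1 <= #|F| ^ (k - u))%N by rewrite expn_gt0 (leq_trans _ q2).
have b2 : (2 <= #|F| ^ u)%N.
  by apply: leq_trans (leq_pexp2l (ltnW q2) hu); rewrite expn1.
have hb : (h * (#|F| ^ (k - u) - 1) <= #|F| ^ u * (#|F| ^ (k - u) - 1))%N
  by rewrite leq_mul2r hhq orbT.
rewrite ek; move: hb a1 b2; set a := (#|F| ^ (k - u))%N; set b := (#|F| ^ u)%N.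
move=> hb a1 b2 C; exfalso; clearbody a b; nia.
Qed.

Lemma arith_lb (q w S A B h : nat) : (1 < q)%N -> (w * (q - 1) + S = q * A - A)%N ->
  (S <= (q * B - B) * h)%N -> (A - h * B <= w)%N.
Proof.
move=> q1 E HS.
have e1 : (q * A - A = (q - 1) * A)%N by rewrite mulnBl mul1n.
have e2 : (q * B - B = (q - 1) * B)%N by rewrite mulnBl mul1n.
rewrite e1 in E; rewrite e2 in HS.
move: E HS; set c := (q - 1)%N; have c0 : (0 < c)%N by rewrite /c; lia.
clearbody c => E HS.
rewrite leq_subLR -(leq_pmul2l c0).
nia.
Qed.

Lemma arith_eq (q w A B h : nat) : (1 < q)%N -> (h * B < A)%N ->
  (w * (q - 1) + (q * B - B) * h = q * A - A)%N -> w = (A - h * B)%N.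
Proof.
move=> q1 hA E.
have e1 : (q * A - A = (q - 1) * A)%N by rewrite mulnBl mul1n.
have e2 : (q * B - B = (q - 1) * B)%N by rewrite mulnBl mul1n.
rewrite e1 e2 in E.
move: E; set c := (q - 1)%N; have c0 : (0 < c)%N by rewrite /c; lia.
clearbody c => E.
apply/eqP; rewrite -(eqn_pmul2l c0); apply/eqP.
rewrite mulnBr; nia.
Qed.

Lemma arith_pos (q A B h : nat) : (1 < q)%N -> (0 < B)%N ->
  (h * (q * B - 1) < q * A - A)%N -> (h * B < A)%N.
Proof.
move=> q1 B0 E.
have e1 : (q * A - A = (q - 1) * A)%N by rewrite mulnBl mul1n.
have e2 : ((q - 1) * B <= q * B - 1)%N by rewrite mulnBl mul1n; lia.
rewrite e1 in E.
move: E e2; set c := (q - 1)%N; have c0 : (0 < c)%N by rewrite /c; lia.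
clearbody c => E e2.
rewrite -(ltn_pmul2l c0).
have : (h * (c * B) <= h * (q * B - 1))%N by rewrite leq_mul2l e2 orbT.
move: E; set d := (q * B - 1)%N; clearbody d; nia.
Qed.

Lemma wt0 (F : fieldType) n : wt (0 : 'rV[F]_n) = 0%N.
Proof.
rewrite /wt; apply/eqP; rewrite cards_eq0; apply/eqP/setP => j.
by rewrite !inE mxE eqxx.
Qed.

Arguments arith_pos {q A B h}.
Arguments arith_lb {q w S A B h}.
Arguments arith_eq {q w A B h}.
Arguments rank_cap {F k} A {x}.
Arguments exists_good {F k h u Us}.

Theorem theorem2p2 (F : finFieldType) (q k u h : nat)
  (hq : #|F| = q) (hk : (3 <= k)%N) (hu : (2 <= u)%N) (hh : (1 <= h)%N)
  (Us : 'I_h -> 'M[F]_k)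
  (hdim : forall i, \rank (Us i) = u)
  (hdisj : forall i j, i != j -> (Us i :&: Us j)%MS == 0)
  (hineq : (h * (q ^ u - 1) < q ^ k - q ^ k.-1)%N)
  (n : nat) (G : 'M[F]_(k, n))
  (hcols : forall j : 'I_n, outside_subspaces Us (colv G j))
  (hrep : forall v : 'rV[F]_k, outside_subspaces Us v ->
     exists! j : 'I_n, exists2 lam : F, lam != 0 & colv G j = lam *: v)
  (hhq : (h <= q ^ u)%N) :
  n = ((q ^ k - 1 - h * (q ^ u - 1)) %/ (q - 1))%N /\
  \rank G = k /\
  code_min_dist G (q ^ k.-1 - h * q ^ u.-1)%N.
Proof.
subst q.
have q2 : (1 < #|F|)%N by exact: card_finNzRing_gt1.
have u1 : (1 <= u)%N by lia.
have huk : (u <= k)%N by rewrite -(hdim (Ordinal hh)); exact: rank_leq_col.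
have eqk : (#|F| ^ k = #|F| * #|F| ^ k.-1)%N by rewrite -expnS prednK //; lia.
have equ : (#|F| ^ u = #|F| * #|F| ^ u.-1)%N by rewrite -expnS prednK //; lia.
have B0 : (0 < #|F| ^ u.-1)%N by rewrite expn_gt0 (ltnW q2).
have pos : (h * #|F| ^ u.-1 < #|F| ^ k.-1)%N.
  apply: (arith_pos q2 B0); by rewrite -eqk -equ.
have wtx : forall x : 'rV[F]_k, x != 0 ->
   (wt (x *m G) * (#|F| - 1) +
    \sum_(i < h) (#|F| ^ u - #|F| ^ \rank (Us i :&: kermx x^T)) =
    #|F| ^ k - #|F| ^ k.-1)%N.
  move=> x nz.
  have := @gen_count F k h Us hdisj n G hcols hrep (kermx x^T).
  rewrite -(wt_cols _ _ _ G x) mxrank_ker mxrank_tr rank_rV nz /= [(k - 1)%N]subn1.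
  move=> <-; congr (_ + _)%N; apply: eq_bigr => i _; by rewrite hdim.
have term_le : forall (x : 'rV[F]_k) i, x != 0 ->
   (#|F| ^ u - #|F| ^ \rank (Us i :&: kermx x^T) <= #|F| ^ u - #|F| ^ u.-1)%N.
  move=> x i nz; have [/andP [h1 _] _] := rank_cap (Us i) nz.
  rewrite hdim in h1; apply: leq_sub2l; exact: leq_pexp2l (ltnW q2) h1.
have term_eq : forall (x : 'rV[F]_k) i, x != 0 -> ~~ (Us i <= kermx x^T)%MS ->
   (#|F| ^ u - #|F| ^ \rank (Us i :&: kermx x^T) = #|F| ^ u - #|F| ^ u.-1)%N.
  move=> x i nz ni; have [/andP [h1 _] h2] := rank_cap (Us i) nz.
  have := h2 ni; rewrite hdim in h1 *; move=> h3.
  have E : \rank (Us i :&: kermx x^T) = u.-1.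
    by apply/eqP; rewrite eqn_leq h1 andbT -ltnS prednK.
  by rewrite E.
have lb : forall x : 'rV[F]_k, x != 0 ->
    (#|F| ^ k.-1 - h * #|F| ^ u.-1 <= wt (x *m G))%N.
  move=> x nz; apply: (arith_lb q2 (S := \sum_(i < h) (#|F| ^ u - #|F| ^ \rank (Us i :&: kermx x^T)))).
    by rewrite -eqk wtx.
  rewrite -equ -iter_addn_0 -big_const_ord; apply: leq_sum => i _; exact: term_le.
have nz0 : forall x : 'rV[F]_k, x != 0 -> x *m G != 0.
  move=> x nz; apply/eqP => E; have := lb x nz; rewrite E wt0; move: pos; clear; lia.
split.
  have := @gen_count F k h Us hdisj n G hcols hrep 0.
  rewrite mxrank0 expn0.
  under eq_bigr => i _ do rewrite hdim rank_cap0 expn0.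
  rewrite big_const_ord iter_addn_0.
  have -> : [set j | ~~ (colv G j <= (0 : 'M[F]_k))%MS] = setT.
    apply/setP => j; rewrite !inE submx0; by case/andP: (hcols j).
  rewrite cardsT card_ord => <-.
  by rewrite [(h * _)%N]mulnC addnK mulnK // subn_gt0.
split.
  have rf : row_free G.
    rewrite -kermx_eq0; apply/eqP/row_matrixP => i; rewrite row0.
    apply/eqP; apply: contraT => nz; have := nz0 _ nz.
    by rewrite -row_mul mulmx_ker row0 eqxx.
  exact/eqP.
split; last first.
  move=> x xG; apply: lb; apply: contraNneq xG => ->; by rewrite mul0mx.
have [x [nz good]] := exists_good hdim u1 huk hhq.
exists x; split; first exact: nz0.
apply: (arith_eq q2 pos); rewrite -eqk -equ -(wtx x nz); congr (_ + _)%N.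
rewrite -iter_addn_0 -big_const_ord; apply: eq_bigr => i _.
by rewrite term_eq.
Qed.
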